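(* Let $D$ be an associative division algebra finite-dimensional over its center $F$, let $\sigma\in\mathrm{Aut}(D)$ be such that $\sigma|_F$ has finite order $m$, let $F_0=\mathrm{Fix}(\sigma)\cap F$, and let $A=(D,\sigma,d)$ with $d\in D\setminus F_0$. (i) The subgroup of $F_0$-automorphisms of $A$ extending $\mathrm{id}_D$ is isomorphic to $\{k\in F^\times\mid k\sigma(k)\cdots\sigma^{m-1}(k)=1\}$. (ii) If $F_0$ contains a primitive $m$th root of unity $\omega$, then $\langle H_{\mathrm{id},\omega}\rangle$ is a cyclic subgroup of $\mathrm{Aut}_{F_0}(A)$ of order $m$.
   Context: $D[t;\sigma]$ is the twisted polynomial ring: polynomials $\sum a_it^i$ ($a_i\in D$), multiplication determined by $ta=\sigma(a)t$. For $d\in D^\times$, $(D,\sigma,d)$ is the set of polynomials of degree $<m$ in $D[t;\sigma]$ with multiplication $g\circ h=$ remainder of $gh$ on right division by $t^m-d$; it is a unital algebra over $F_0$ containing $D$. For $k\in F^\times$, $H_{\mathrm{id},k}(\sum_{i=0}^{m-1}a_it^i)=a_0+\sum_{i=1}^{m-1}a_i\big(\prod_{l=0}^{i-1}\sigma^l(k)\big)t^i$. *)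

(* Defs.v *)
From HB Require Import structures.
From mathcomp Require Import all_boot all_order all_algebra.
Unset Printing Implicit Defensive.
Import Order.TTheory GRing.Theory Num.Theory.
Local Open Scope ring_scope.

Section NonassocCyclic.
Variable D : unitRingType.

Definition central (x : D) : Prop := forall y : D, x * y = y * x.

Definition division_ring : Prop := forall x : D, x != 0 -> x \is a GRing.unit.

Definition findim_over_center : Prop :=
  exists s : seq D, forall x : D, exists c : seq D,
    [/\ size c = size s, (forall i, central c`_i) &
        x = \sum_(i < size s) c`_i * s`_i].

Variable sigma : {rmorphism D -> D}.

Definition sig_pow (l : nat) (x : D) : D := iter l sigma x.

Definition restr_order (m : nat) : Prop :=
  [/\ (0 < m)%N,
      (forall x, central x -> sig_pow m x = x) &
      (forall j, (0 < j < m)%N -> exists x, central x /\ sig_pow j x != x)].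

Definition inF0 (x : D) : Prop := central x /\ sigma x = x.

Variable m : nat.
Variable d : D.

(* Elements of A = (D,sigma,d): polynomials sum_{i<m} a_i t^i, stored as
   their coefficient vectors. *)
Definition Alg := {ffun 'I_m -> D}.

Definition coef (x : Alg) (n : nat) : D :=
  match insub n with Some i => x i | None => 0 end.

(* coefficients of the product f g in D[t;sigma], where ta = sigma(a) t *)
Definition tmul (f g : nat -> D) (n : nat) : D :=
  \sum_(i < n.+1) f i * sig_pow i (g (n - i)%N).

(* one step of right division by t^m - d eliminating the term of degree N:
   f_N t^N = f_N t^(N-m) (t^m - d) + f_N sigma^(N-m)(d) t^(N-m) *)
Definition red_step (N : nat) (f : nat -> D) : nat -> D :=
  fun n => if n == N then 0
           else if n == (N - m)%N then f n + f N * sig_pow (N - m) d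
           else f n.

(* eliminates successively the degrees m+k-1, ..., m *)
Fixpoint reduce (k : nat) (f : nat -> D) : nat -> D :=
  match k with
  | 0 => f
  | k'.+1 => reduce k' (red_step (m + k') f)
  end.

(* g ∘ h = remainder of gh on right division by t^m - d
   (gh has degree <= 2m-2, so eliminating degrees 2m-2 .. m suffices) *)
Definition amul (x y : Alg) : Alg :=
  [ffun i : 'I_m => reduce m.-1 (tmul (coef x) (coef y)) i].

Definition ascale (c : D) (x : Alg) : Alg := [ffun i => c * x i].

Definition aconst (a : D) : Alg := [ffun i : 'I_m => if val i == 0%N then a else 0].

Definition is_F0_aut (phi : Alg -> Alg) : Prop :=
  [/\ forall x y, phi (x + y) = phi x + phi y,
      forall c x, inF0 c -> phi (ascale c x) = ascale c (phi x),
      forall x y, phi (amul x y) = amul (phi x) (phi y) &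
      bijective phi].

Definition extends_idD (phi : Alg -> Alg) : Prop :=
  forall a : D, phi (aconst a) = aconst a.

Definition H_id (k : D) (x : Alg) : Alg :=
  [ffun i : 'I_m => x i * \prod_(l < val i) sig_pow l k].

Definition norm_one (k : D) : Prop :=
  [/\ central k, k != 0 & \prod_(l < m) sig_pow l k = 1].

End NonassocCyclic.

(* Main.v *)
Require Import Defs.
From HB Require Import structures.
From mathcomp Require Import all_boot all_order all_algebra.
From mathcomp Require Import zify.
Import GRing.Theory.
Local Open Scope ring_scope.

Section S.
Variable D : unitRingType.
Variable sigma : {rmorphism D -> D}.
Variable m : nat.
Variable d : D.
Local Notation A := (Alg D m).
Local Notation sp := (sig_pow D sigma).
Local Notation amul := (amul D sigma m d).
Local Notation coef := (coef D m).
Local Notation central := (central D).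

Lemma spS l a : sp l.+1 a = sigma (sp l a).
Proof. by rewrite /sig_pow iterS. Qed.
Lemma sp0n a : sp 0 a = a. Proof. by []. Qed.
Lemma sp0 l : sp l 0 = 0.
Proof. by elim: l => // l IH; rewrite spS IH rmorph0. Qed.
Lemma sp1 l : sp l 1 = 1.
Proof. by elim: l => // l IH; rewrite spS IH rmorph1. Qed.
Lemma spM l a b : sp l (a * b) = sp l a * sp l b.
Proof. by elim: l => // l IH; rewrite !spS IH rmorphM. Qed.
Lemma spD l a b : sp l (a + b) = sp l a + sp l b.
Proof. by elim: l => // l IH; rewrite !spS IH rmorphD. Qed.
Lemma sp_add i j a : sp (i + j) a = sp i (sp j a).
Proof. by rewrite /sig_pow iterD. Qed.
Lemma sp_unit l a : a \is a GRing.unit -> sp l a \is a GRing.unit.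
Proof. by move=> ua; elim: l => // l IH; rewrite spS rmorph_unit. Qed.

Lemma central0 : central 0. Proof. by move=> y; rewrite mul0r mulr0. Qed.
Lemma central1 : central 1. Proof. by move=> y; rewrite mul1r mulr1. Qed.
Lemma centralM a b : central a -> central b -> central (a * b).
Proof. by move=> ca cb y; rewrite -mulrA cb mulrA ca mulrA. Qed.

Hypothesis Hbij : bijective sigma.

Lemma central_sigma c : central c -> central (sigma c).
Proof.
case: Hbij => g sg gs cc y.
by rewrite -[y]gs -!rmorphM cc.
Qed.
Lemma central_sp l c : central c -> central (sp l c).
Proof. by move=> cc; elim: l => // l IH; rewrite spS; apply: central_sigma. Qed.

Definition K (k : D) (n : nat) := \prod_(l < n) sp l k.
Lemma K0 k : K k 0 = 1. Proof. by rewrite /K big_ord0. Qed.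
Lemma KS k n : K k n.+1 = K k n * sp n k. Proof. by rewrite /K big_ord_recr. Qed.
Lemma central_K k n : central k -> central (K k n).
Proof.
move=> ck; elim: n => [|n IH]; first by rewrite K0; apply: central1.
by rewrite KS; apply: centralM => //; apply: central_sp.
Qed.
Lemma K_add k a b : K k (a + b) = K k a * sp a (K k b).
Proof.
elim: b => [|b IH]; first by rewrite addn0 K0 sp1 mulr1.
by rewrite addnS !KS IH spM -sp_add mulrA.
Qed.
Lemma K_unit k n : k \is a GRing.unit -> K k n \is a GRing.unit.
Proof.
move=> uk; elim: n => [|n IH]; first by rewrite K0 unitr1.
by rewrite KS unitrMl // sp_unit.
Qed.
Lemma K_mul k k' n : central k -> central k' -> K (k * k') n = K k n * K k' n.
Proof.
move=> ck ck'; elim: n => [|n IH]; first by rewrite !K0 mulr1.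
rewrite !KS IH spM -!mulrA; congr (_ * _); rewrite !mulrA; congr (_ * _).
by rewrite (central_K _ _ ck').
Qed.
Lemma K1 n : K 1 n = 1.
Proof. by elim: n => [|n IH]; rewrite ?K0 // KS IH sp1 mulr1. Qed.
Lemma K_1 k : K k 1 = k.
Proof. by rewrite KS K0 mul1r. Qed.


Local Notation tmul := (tmul D sigma).
Local Notation red_step := (red_step D sigma m d).
Local Notation reduce := (reduce D sigma m d).

Lemma tmul_ext f f' g g' : f =1 f' -> g =1 g' -> tmul f g =1 tmul f' g'.
Proof. by move=> ef eg n; apply: eq_bigr => i _; rewrite ef eg. Qed.

Lemma red_step_ext N f g : f =1 g -> red_step N f =1 red_step N g.
Proof. by move=> e n; rewrite /Defs.red_step !e. Qed.

Lemma reduce_ext k f g : f =1 g -> reduce k f =1 reduce k g.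
Proof.
elim: k f g => [|k IH] f g e //=.
by apply: IH; apply: red_step_ext.
Qed.

Definition tw (k : D) (f : nat -> D) n := f n * K k n.

Lemma tmul_tw k f g n : central k ->
  tmul (tw k f) (tw k g) n = tmul f g n * K k n.
Proof.
move=> ck; rewrite /Defs.tmul mulr_suml; apply: eq_bigr => i _.
have hi : (i <= n)%N by rewrite -ltnS.
rewrite /tw spM.
have -> : K k n = K k i * sp i (K k (n - i)) by rewrite -K_add subnKC.
rewrite -!mulrA; congr (_ * _); rewrite !mulrA; congr (_ * _).
by rewrite (central_K _ _ ck).
Qed.

Lemma red_step_tw k f N : central k -> K k m = 1 -> (m <= N)%N ->
  red_step N (tw k f) =1 tw k (red_step N f).
Proof.
move=> ck Km hN n; rewrite /Defs.red_step /tw.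
case: eqP => [->|_]; first by rewrite mul0r.
case: eqP => [->|_] //.
have -> : K k N = K k (N - m) by rewrite -{1}(subnK hN) K_add Km sp1 mulr1.
rewrite mulrDl -!mulrA; congr (_ + _ * _).
by rewrite (central_K _ _ ck).
Qed.

Lemma reduce_tw k j f : central k -> K k m = 1 ->
  reduce j (tw k f) =1 tw k (reduce j f).
Proof.
move=> ck Km; elim: j f => [|j IH] f n //=.
by rewrite (reduce_ext _ _ _ (@red_step_tw k f (m + j) ck Km (leq_addr _ _))) IH.
Qed.

Lemma coef_H k x n : coef (H_id D sigma m k x) n = tw k (coef x) n.
Proof.
rewrite /Defs.coef /tw; case: insubP => [i _ <-|_]; last by rewrite mul0r.
by rewrite ffunE.
Qed.

Lemma H_mul k x y : central k -> K k m = 1 ->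
  H_id D sigma m k (amul x y) = amul (H_id D sigma m k x) (H_id D sigma m k y).
Proof.
move=> ck Km; apply/ffunP => i; rewrite !ffunE.
rewrite (reduce_ext _ _ _ (tmul_ext _ _ _ _ (coef_H k x) (coef_H k y))).
rewrite (reduce_ext _ _ _ (fun n => tmul_tw k (coef x) (coef y) n ck)).
have := reduce_tw k (m.-1) (tmul (coef x) (coef y)) ck Km i.
by rewrite /tw => ->.
Qed.


Lemma H_idE k x i : H_id D sigma m k x i = x i * K k i.
Proof. by rewrite ffunE. Qed.

Lemma H_aut k : central k -> k \is a GRing.unit -> K k m = 1 ->
  is_F0_aut D sigma m d (H_id D sigma m k) /\ extends_idD D m (H_id D sigma m k).
Proof.
move=> ck uk Km; split; last first.
  move=> a; apply/ffunP => i; rewrite H_idE !ffunE.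
  case: eqP => [e|_]; last by rewrite mul0r.
  by rewrite e K0 mulr1.
split.
- by move=> x y; apply/ffunP => i; rewrite !ffunE mulrDl.
- by move=> c x _; apply/ffunP => i; rewrite !ffunE mulrA.
- by move=> x y; apply: H_mul.
- exists (fun x : A => [ffun i : 'I_m => x i * (K k i)^-1]) => x; apply/ffunP => i;
    rewrite !ffunE.
    by rewrite -/(K k i) mulrK // K_unit.
  by rewrite divrK // K_unit.
Qed.

Definition mono (a : D) (i : nat) : A := [ffun j : 'I_m => if val j == i then a else 0].
Lemma aconst_mono a : aconst D m a = mono a 0. Proof. by []. Qed.

Lemma coef_mono a i n : (i < m)%N -> coef (mono a i) n = if n == i then a else 0.
Proof.
move=> im; rewrite /Defs.coef; case: insubP => [j _ <-|]; first by rewrite ffunE.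
move=> nm; case: eqP => // e; by rewrite e im in nm.
Qed.

Lemma coef_ord (x : A) (i : 'I_m) : coef x i = x i.
Proof. by rewrite /Defs.coef valK. Qed.

Lemma coef_out (x : A) n : (m <= n)%N -> coef x n = 0.
Proof. by move=> h; rewrite /Defs.coef insubF // ltnNge h. Qed.

Lemma sum_if N i (c : D) : \sum_(l < N) (if (l : nat) == i then c else 0) = if (i < N)%N then c else 0.
Proof.
elim: N => [|N IH]; first by rewrite big_ord0.
rewrite big_ord_recr /= IH.
case: (ltngtP i N) => h /=; rewrite ?ltnS.
- by rewrite addr0 (ltnW h).
- by rewrite leqNgt h addr0.
- by rewrite h leqnn add0r.
Qed.

Lemma tmul_mono a b i j n : (i < m)%N -> (j < m)%N ->
  tmul (coef (mono a i)) (coef (mono b j)) n = if n == (i + j)%N then a * sp i b else 0.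
Proof.
move=> im jm; rewrite /Defs.tmul.
rewrite (eq_bigr (fun l : 'I_n.+1 => if (l:nat) == i then (if (n - i == j)%N then a * sp i b else 0) else 0)); last first.
  move=> l _; rewrite !coef_mono //; case: (eqVneq (l:nat) i) => [e|ne]; last by rewrite mul0r.
  rewrite e.
  by case: eqP => _; rewrite ?sp0 ?mulr0.
rewrite sum_if ltnS; case: leqP => h.
  have -> : ((n - i)%N == j) = (n == (i + j)%N) by apply/eqP/eqP; lia.
  by [].
by case: eqP => // e; lia.
Qed.

Lemma no_red k f : (forall N, (m <= N)%N -> f N = 0) -> reduce k f =1 f.
Proof.
elim: k f => [|k IH] f hf n //=.
rewrite (reduce_ext _ _ f) ?IH //.
move=> p; rewrite /Defs.red_step (hf (m + k)%N) ?leq_addr //.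
case: eqP => [->|_]; first by rewrite hf ?leq_addr.
by case: eqP => // _; rewrite mul0r addr0.
Qed.

Lemma red_m k f : (forall N, (m < N)%N -> f N = 0) -> (0 < k)%N -> reduce k f =1 red_step m f.
Proof.
elim: k f => [|k IH] f hf // _ n /=.
case: k IH => [|k] IH; first by rewrite addn0.
rewrite (reduce_ext _ _ f) ?IH //.
have hlt : (m < m + k.+1)%N by lia.
move=> p; rewrite /Defs.red_step (hf (m + k.+1)%N) //.
case: eqP => [->|_]; first by rewrite hf.
by case: eqP => // _; rewrite mul0r addr0.
Qed.

Lemma amul_mono a b i j : (i + j < m)%N -> amul (mono a i) (mono b j) = mono (a * sp i b) (i + j).
Proof.
move=> h; have im : (i < m)%N by lia.
have jm : (j < m)%N by lia.
apply/ffunP => l; rewrite !ffunE no_red; last first.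
  by move=> N hN; rewrite tmul_mono //; case: eqP => // e; lia.
by rewrite tmul_mono.
Qed.

Lemma amul_wrap a b i j : (i < m)%N -> (j < m)%N -> (i + j)%N = m ->
  amul (mono a i) (mono b j) = aconst D m (a * sp i b * d).
Proof.
move=> im jm e; apply/ffunP => l; rewrite !ffunE red_m; last 2 first.
- by move=> N hN; rewrite tmul_mono //; case: eqP => // e'; lia.
- lia.
rewrite /Defs.red_step !tmul_mono // subnn e eqxx.
have lm := ltn_ord l; rewrite (ltn_eqF lm).
have m0 : (0 == m)%N = false by apply: negbTE; apply/eqP; lia.
by rewrite ?m0 add0r.
Qed.

Lemma amul_r_const u a : (0 < m)%N -> amul u (aconst D m a) = [ffun i => u i * sp i a].
Proof.
move=> m0; apply/ffunP => l; rewrite !ffunE.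
have ht : forall n, tmul (coef u) (coef (aconst D m a)) n = coef u n * sp n a.
  move=> n; rewrite /Defs.tmul.
  rewrite (eq_bigr (fun p : 'I_n.+1 => if (p:nat) == n then coef u n * sp n a else 0)); last first.
    move=> p _; rewrite aconst_mono coef_mono //.
    case: (eqVneq (p:nat) n) => [e|pn]; first by rewrite e subnn eqxx.
    have -> : (n - p == 0)%N = false by have hp := ltn_ord p; move: pn => /eqP pn; apply: negbTE; apply/eqP; lia.
    by rewrite sp0 mulr0.
  by rewrite sum_if ltnSn.
rewrite no_red ?ht ?coef_ord //.
by move=> N hN; rewrite ht coef_out ?mul0r.
Qed.

Lemma amul_l_const b u : (0 < m)%N -> amul (aconst D m b) u = [ffun i => b * u i].
Proof.
move=> m0; apply/ffunP => l; rewrite !ffunE.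
have ht : forall n, tmul (coef (aconst D m b)) (coef u) n = b * coef u n.
  move=> n; rewrite /Defs.tmul.
  rewrite (eq_bigr (fun p : 'I_n.+1 => if (p:nat) == 0%N then b * coef u n else 0)); last first.
    move=> p _; rewrite aconst_mono coef_mono //.
    by case: eqP => [->|_]; rewrite ?subn0 ?mul0r.
  by rewrite sum_if.
rewrite no_red ?ht ?coef_ord //.
by move=> N hN; rewrite ht coef_out ?mulr0.
Qed.

Lemma decomp (y : A) : y = \sum_(i < m) mono (y i) i.
Proof.
apply/ffunP => j; rewrite sum_ffunE (bigD1 j) //= !ffunE eqxx big1 ?addr0 // => i ij.
rewrite ffunE; case: eqP => // /val_inj e.
by rewrite e eqxx in ij.
Qed.


Lemma converse phi : division_ring D -> restr_order D sigma m -> ~ inF0 D sigma d ->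
  is_F0_aut D sigma m d phi -> extends_idD D m phi ->
  exists2 k, norm_one D sigma m k & phi =1 H_id D sigma m k.
Proof.
move=> divD [mpos hfix hnfix] nd [hadd _ hmul hbij] hext.
have phi0 : phi 0 = 0.
  by apply: (@addrI _ (phi 0)); rewrite -hadd !addr0.
have phisum : forall x, phi x = \sum_(i < m) phi (mono (x i) i).
  by move=> x; rewrite {1}(decomp x) (big_morph phi hadd phi0).
case: (ltnP 1 m) => m2; last first.
  exists 1; first by split; [exact: central1 | exact: oner_neq0 | exact: (K1 m)].
  move=> x; rewrite phisum (decomp (H_id D sigma m 1 x)); apply: eq_bigr => i _.
  have i0 : val i = 0%N by apply/eqP; rewrite -leqn0 -ltnS; exact: leq_trans (ltn_ord i) m2.
  rewrite ffunE i0 big1 => [|l _]; last exact: sp1.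
  by rewrite mulr1 -aconst_mono hext.
pose t := mono 1 1.
have comm : forall a, amul (phi t) (aconst D m a) = amul (aconst D m (sigma a)) (phi t).
  move=> a; rewrite -(hext a) -(hext (sigma a)) -!hmul; congr phi.
  by rewrite !aconst_mono /t !amul_mono //= ?mul1r ?sp1 ?mulr1.
have hu : forall (i : 'I_m) a, phi t i * sp i a = sigma a * phi t i.
  move=> i a; have := congr1 (fun x : A => x i) (comm a).
  by rewrite /= amul_r_const ?amul_l_const ?ffunE.
have uz : forall i : 'I_m, val i != 1%N -> phi t i = 0.
  move=> i i1; case: (eqVneq (phi t i) 0) => // /divD ui; exfalso.
  case: (posnP i) => [i0 | ipos].
    have [c [cc /eqP hc]] := hnfix 1%N m2.
    apply: hc; have := hu i c; rewrite i0 /= -cc; move/(mulIr ui) => e.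
    exact: (esym e).
  have i1' : (nat_of_ord i != 1)%N := i1.
  have hj : (0 < (nat_of_ord i).-1 < m)%N by have hi := ltn_ord i; move: i1' => /eqP i1'; apply/andP; split; lia.
  have [c [cc /eqP hc]] := hnfix _ hj.
  apply: hc; have := hu i c; rewrite -(central_sp i c cc (phi t i)).
  move/(mulIr ui); have ei : nat_of_ord i = ((nat_of_ord i).-1).+1 by move: i1' => /eqP i1'; lia.
  rewrite ei spS; exact: (bij_inj Hbij).
pose i1 : 'I_m := Ordinal m2.
pose k := phi t i1.
have ck : central k.
  move=> y; case: Hbij => g sg gs; rewrite -[y]gs.
  exact: (hu i1 (g y)).
have k0 : k != 0.
  apply/eqP => k0.
  have u0 : phi t = 0.
    apply/ffunP => i; rewrite ffunE; case: (eqVneq (val i) 1%N) => [e|ne]; last exact: uz.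
    by have -> : i = i1 by apply: val_inj.
  have : t = 0 by apply: (bij_inj hbij); rewrite phi0.
  move/(congr1 (fun x : A => x i1)); rewrite !ffunE /=.
  by move/eqP; rewrite oner_eq0.
have ku : phi t = mono k 1.
  apply/ffunP => i; rewrite ffunE; case: eqP => [e|/eqP ne]; last exact: uz.
  by have -> : i = i1 by apply: val_inj.
have hmono : forall n a, (n < m)%N -> phi (mono a n) = mono (a * K k n) n.
  elim => [|n IH] a hn; first by rewrite K0 mulr1 -aconst_mono hext.
  have -> : mono a n.+1 = amul (mono a n) t by rewrite /t amul_mono ?addn1 ?sp1 ?mulr1.
  by rewrite hmul IH ?(ltnW hn) // ku amul_mono ?addn1 // KS mulrA.
have hphi : phi =1 H_id D sigma m k.
  move=> x; rewrite phisum (decomp (H_id D sigma m k x)); apply: eq_bigr => i _.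
  by rewrite hmono // ffunE.
have dn0 : d != 0.
  apply/eqP => d0; apply: nd; rewrite d0; split; [exact: central0 | exact: rmorph0].
have Km : K k m = 1.
  have e : amul (mono 1 m.-1) t = aconst D m d.
    by rewrite amul_wrap ?mul1r ?sp1 ?mul1r //; lia.
  have := congr1 phi e; rewrite hext hmul hmono ?ku ?amul_wrap; try lia.
  pose i0 : 'I_m := Ordinal mpos.
  move/(congr1 (fun x : A => x i0)); rewrite !ffunE /= mul1r -KS prednK //.
  by rewrite -{2}[d]mul1r; apply: (mulIr (divD _ dn0)).
by exists k.
Qed.

Lemma Phi_inj k k' : restr_order D sigma m -> norm_one D sigma m k -> norm_one D sigma m k' ->
  H_id D sigma m k =1 H_id D sigma m k' -> k = k'.
Proof.
move=> [mpos _ _] [_ _ hk] [_ _ hk'] e.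
case: (ltnP 1 m) => m2; last first.
  have m1 : m = 1%N by lia.
  by move: hk hk'; rewrite m1 !big_ord1 /= => -> ->.
pose i1 : 'I_m := Ordinal m2.
have := congr1 (fun x : A => x i1) (e (mono 1 1)); rewrite !ffunE /=.
by rewrite !big_ord1 !mul1r.
Qed.

Lemma Phi_hom k k' : central k -> central k' ->
  H_id D sigma m (k * k') =1 H_id D sigma m k \o H_id D sigma m k'.
Proof.
move=> ck ck' x; apply/ffunP => i; rewrite /= !H_idE K_mul // -mulrA.
by rewrite (central_K _ _ ck).
Qed.

Lemma sp_fix w l : sigma w = w -> sp l w = w.
Proof. by move=> sw; elim: l => // l IH; rewrite spS IH sw. Qed.

Lemma K_fix w n : sigma w = w -> K w n = w ^+ n.
Proof. by move=> sw; elim: n => [|n IH]; rewrite ?K0 ?expr0 // KS IH sp_fix // exprSr. Qed.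

Lemma iterH w j x : sigma w = w ->
  iter j (H_id D sigma m w) x = [ffun i : 'I_m => x i * w ^+ (i * j)].
Proof.
move=> sw; elim: j => [|j IH]; first by apply/ffunP => i; rewrite ffunE muln0 expr0 mulr1.
apply/ffunP => i; rewrite iterS IH H_idE !ffunE K_fix //.
by rewrite -mulrA -exprD -mulnSr.
Qed.

End S.
Theorem corollary3p2 (D : unitRingType) (sigma : {rmorphism D -> D}) (m : nat) (d : D) :
  division_ring D -> findim_over_center D ->
  bijective sigma -> restr_order D sigma m -> ~ inF0 D sigma d ->
  (* (i) *)
  (exists Phi : D -> (Alg D m -> Alg D m),
     [/\ forall k, norm_one D sigma m k ->
           is_F0_aut D sigma m d (Phi k) /\ extends_idD D m (Phi k),
         forall k k', norm_one D sigma m k -> norm_one D sigma m k' ->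
           Phi k =1 Phi k' -> k = k',
         forall phi, is_F0_aut D sigma m d phi -> extends_idD D m phi ->
           exists2 k, norm_one D sigma m k & phi =1 Phi k &
         forall k k', norm_one D sigma m k -> norm_one D sigma m k' ->
           Phi (k * k') =1 Phi k \o Phi k']) /\
  (* (ii) *)
  (forall omega : D, inF0 D sigma omega -> m.-primitive_root omega ->
     [/\ is_F0_aut D sigma m d (H_id D sigma m omega),
         iter m (H_id D sigma m omega) =1 id &
         forall j, (0 < j < m)%N -> ~ (iter j (H_id D sigma m omega) =1 id)]).
Proof.
move=> divD _ hb ro nd.
have [mpos _ _] := ro.
split.
- exists (H_id D sigma m); split.
  + move=> k [ck k0 hk]; apply: H_aut => //; exact: divD.
  + move=> k k' hk hk' e; exact: Phi_inj ro hk hk' e.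
  + by move=> phi ha he; exact: (@converse D sigma m d hb phi divD ro nd ha he).
  + by move=> k k' [ck _ _] [ck' _ _]; apply: Phi_hom.
- move=> w [cw sw] pw.
  have wm := prim_expr_order pw.
  have w0 : w != 0.
    apply/eqP => w0; move: wm; rewrite w0 expr0n (gtn_eqF mpos) /=.
    by move/eqP; rewrite eq_sym oner_eq0.
  split.
  + apply: (proj1 (@H_aut D sigma m d hb w cw (divD _ w0) _)).
    by rewrite K_fix.
  + move=> x; rewrite iterH //; apply/ffunP => i.
    by rewrite ffunE mulnC exprM wm expr1n mulr1.
  + move=> j hj e.
    have m2 : (1 < m)%N by case/andP: hj => h1 h2; lia.
    pose i1 : 'I_m := Ordinal m2.
    have := congr1 (fun x : Alg D m => x i1) (e (mono D m 1 1)).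
    rewrite iterH // !ffunE /= mul1n mul1r => /eqP.
    rewrite -(prim_order_dvd pw) => /dvdn_leq.
    by case/andP: hj => h1 h2 /(_ h1); rewrite leqNgt h2.
Qed.
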